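(* Let $N$ be a prime and let $f$ be a function satisfying the standing assumptions in the context. Let $X,Y,Z \subseteq \mathbb{Z}/N\mathbb{Z}$ and $0<\delta_1\le\delta_2$ be such that for each $x\in X$ the number of $y\in Y$ with $-x-y\in Z$ lies between $\delta_1 N$ and $\delta_2 N$, and the same holds with the roles of $X$, $Y$, $Z$ permuted (i.e. for each $y \in Y$ the number of $z\in Z$ with $-y-z\in X$ lies between $\delta_1N$ and $\delta_2N$, and similarly for each element of each set, with any ordering of the other two sets). Then $$|X| \le K \frac{\delta_2}{\delta_1} f(\delta_2^{-1}) N$$ for an absolute constant $K$, and the analogous inequalities hold for $|Y|$ and $|Z|$.
   Context: An additive matching in a finite abelian group $G$ is a collection of triples $(x_i,y_i,z_i)$, $i=1,\dots,m$, of elements of $G$ with $x_i + y_j + z_k = 0$ if and only if $i=j=k$; its size is $m$. Standing assumptions: $f$ is a positive function such that for every $M$, every additive matching in $\mathbb{Z}/M\mathbb{Z}$ has size at most $f(M)M$; $f$ is decreasing, while $Af(A)<Bf(B)$ whenever $A<B$. *)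

(* Defs.v *)
From HB Require Import structures.
From mathcomp Require Import all_boot all_order all_algebra.
From mathcomp Require Import reals.
Set Implicit Arguments. Unset Strict Implicit. Unset Printing Implicit Defensive.
Import Order.TTheory GRing.Theory Num.Theory.
Local Open Scope ring_scope.

Definition additive_matching (G : zmodType) (m : nat) (x y z : 'I_m -> G) : Prop :=
  forall i j k : 'I_m, (x i + y j + z k == 0) = ((i == j) && (j == k)).

(* Standing assumptions on f : (0, oo) -> R.
   Z/MZ for M >= 1 is represented as 'I_M'.+1 with M = M'.+1. *)
Definition standing_assumptions (R : realType) (f : R -> R) : Prop :=
  [/\ (forall x : R, 0 < x -> 0 < f x),
      (forall (M m : nat) (x y z : 'I_m -> 'I_M.+1),
          additive_matching x y z -> (m%:R : R) <= f (M.+1)%:R * (M.+1)%:R),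
      (forall A B : R, 0 < A -> A <= B -> f B <= f A) &
      (forall A B : R, 0 < A -> A < B -> A * f A < B * f B)].

Definition count_bounds (N : nat) (R : realType) (d1 d2 : R)
    (A B C : {set 'Z_N}) : Prop :=
  forall a, a \in A ->
    d1 * N%:R <= (#|[set b in B | - a - b \in C]|)%:R /\
    (#|[set b in B | - a - b \in C]|)%:R <= d2 * N%:R.

(* Main.v *)
Require Import Defs.
From HB Require Import structures.
From mathcomp Require Import all_boot all_order all_algebra.
From mathcomp Require Import reals.
From mathcomp Require Import ring lra zify.
Import Order.TTheory GRing.Theory Num.Theory.
Local Open Scope ring_scope.

Module Helpers.
Set Implicit Arguments. Unset Strict Implicit. Unset Printing Implicit Defensive.


Lemma sum_boolT (T : finType) (A : {pred T}) : (\sum_(u : T) (u \in A : nat))%N = #|A|.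
Proof.
by rewrite -sum1_card [in RHS]big_mkcond /=; apply: eq_bigr => i _; case: (i \in A).
Qed.

Section Zp.
Variable p' : nat.
Local Notation N := p'.+2.
Local Notation G := 'Z_N.
Local Notation v x := (nat_of_ord (x%R : G)).

Lemma valG_nat n : (n < N)%N -> v (n%:R : G) = n.
Proof. by move=> h; rewrite val_Zp_nat // modn_small. Qed.

Lemma natr_valG (x : G) : (v x)%:R = x.
Proof. exact: natr_Zp. Qed.

Lemma val_sub_le (a b : G) : (v b <= v a)%N -> v (a - b) = (v a - v b)%N.
Proof.
move=> h; rewrite -{1}(natr_valG a) -{1}(natr_valG b) -natrB // valG_nat //.
exact: leq_ltn_trans (leq_subr _ _) (ltn_ord a).
Qed.

Lemma diff_small (L : nat) (w1 w2 : G) : (v w1 < L)%N -> (v w2 < L)%N ->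
  (v (w2 - w1) < L)%N || (v (- (w2 - w1)) < L)%N.
Proof.
move=> h1 h2; case: (leqP (v w1) (v w2)) => h.
  have -> : v (w2 - w1) = (v w2 - v w1)%N by apply: val_sub_le.
  by apply/orP; left; lia.
have -> : (- (w2 - w1)) = w1 - w2 by rewrite opprB.
have -> : v (w1 - w2) = (v w1 - v w2)%N by apply: val_sub_le; apply: ltnW.
by apply/orP; right; lia.
Qed.

Lemma card_window0 (L : nat) : (L <= N)%N -> #|[set w : G | (v w < L)%N]| = L.
Proof.
move=> hL.
have -> : [set w : G | (v w < L)%N] = [set widen_ord hL i | i in 'I_L].
  apply/setP => w; rewrite inE; apply/idP/imsetP.
    by move=> hw; exists (Ordinal hw) => //; apply: val_inj.
  by case=> i _ ->; rewrite /= ltn_ord.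
by rewrite card_imset ?card_ord //; by move=> i j /(congr1 val) /= /val_inj.
Qed.

Lemma card_window0_le (L : nat) : (#|[set w : G | (v w < L)%N]| <= L)%N.
Proof.
case: (leqP L N) => hL; first by rewrite card_window0.
apply: leq_trans (max_card _) _; rewrite card_ord; exact: ltnW.
Qed.

Lemma card_window (L : nat) (a : G) : (L <= N)%N -> #|[set u : G | (v (a - u) < L)%N]| = L.
Proof.
move=> hL.
have -> : [set u : G | (v (a - u) < L)%N] = [set a - w | w in [set w : G | (v w < L)%N]].
  apply/setP => u; rewrite inE; apply/idP/imsetP.
    by move=> hw; exists (a - u); rewrite ?inE //; ring.
  by case=> w; rewrite inE => hw ->; have -> : a - (a - w) = w by ring.
by rewrite card_imset ?card_window0 //; exact: subrI.
Qed.

Lemma unitG (l : G) : prime N -> l != 0 -> l \is a GRing.unit.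
Proof.
move=> pN l0; rewrite -(natr_valG l) unitZpE // prime_coprime //.
apply/negP => /dvdn_leq; rewrite lt0n.
have -> : v l != 0%N by apply: contra l0 => /eqP h; apply/eqP/val_inj.
by move=> /(_ isT); rewrite leqNgt ltn_ord.
Qed.

Lemma card_line (L : nat) (d : G) (g : G -> G) : injective g ->
  (#|[set l : G | (v (g l) < L)%N]| <= L)%N.
Proof.
move=> ig; apply: leq_trans (card_window0_le L).
rewrite -(card_imset _ ig); apply: subset_leq_card; apply/subsetP => w /imsetP [l].
by rewrite !inE => h ->.
Qed.

Lemma sum_bool (A : {pred G}) : (\sum_(u : G) (u \in A : nat))%N = #|A|.
Proof.
by rewrite -sum1_card [in RHS]big_mkcond /=; apply: eq_bigr => i _; case: (i \in A).
Qed.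

Definition Sum3 (F : G -> G -> G -> nat) :=
  (\sum_(l : G | l != 0%R) \sum_(u : G) \sum_(w : G) F l u w)%N.

Lemma Sum3_sum (T : finType) (F : G -> G -> G -> T -> nat) :
  Sum3 (fun l u w => \sum_(t : T) F l u w t)%N = (\sum_(t : T) Sum3 (fun l u w => F l u w t))%N.
Proof.
rewrite /Sum3 [RHS]exchange_big; apply: eq_bigr => l _.
rewrite [RHS]exchange_big; apply: eq_bigr => u _.
by rewrite [RHS]exchange_big.
Qed.

Lemma Sum3_le (F1 F2 : G -> G -> G -> nat) : (forall l u w : G, l != 0 -> (F1 l u w <= F2 l u w)%N) ->
  (Sum3 F1 <= Sum3 F2)%N.
Proof.
move=> h; rewrite /Sum3; apply: leq_sum => l hl; apply: leq_sum => u _; apply: leq_sum => w _.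
exact: h.
Qed.

Lemma cnt_nz : (\sum_(l : G | l != 0%R) 1)%N = N.-1.
Proof. by rewrite sum1_card cardC1 card_ord. Qed.

Lemma inner_prod (P Q : G -> bool) :
  (\sum_(u : G) \sum_(w : G) (P u && Q w : nat))%N = (#|[set u | P u]| * #|[set w | Q w]|)%N.
Proof.
rewrite -!sum_bool big_distrl /=; apply: eq_bigr => u _; rewrite big_distrr /=.
by apply: eq_bigr => w _; rewrite !inE; case: (P u); case: (Q w).
Qed.

End Zp.


Lemma eqle (R : realType) (a b : R) : a = b -> a <= b.
Proof. by move=> ->. Qed.

Lemma final_alg (R : realType) (t n l x d1 d2 F2 F : R) :
 0 < d1 -> d1 <= d2 -> 2 <= n -> 1 <= l -> 24 * d2 * l <= 1 -> 1 <= 48 * d2 * l ->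
 0 <= t -> 0 <= F2 -> 0 <= x ->
 t * (n - 1) * (l * l) <= (n - 1) * (n * (n * (F2 * (2 * l)))) + (l * l * (l + l)) * (3 * (t * (d2 * n))) ->
 x * (d1 * n) <= t ->
 F2 * (2 * l) <= F * d2^-1 ->
 x <= 4608 * (d2 / d1) * F * n.
Proof.
move=> d1p h12 n2 l1 hl1 hl2 t0 F20 x0 H T F2b.
have d2p : 0 < d2 by apply: lt_le_trans h12.
have lp : 0 < l by apply: lt_le_trans l1; lra.
have np : 0 < n by lra.
have s1 : 2 * ((l * l * (l + l)) * (3 * (t * (d2 * n)))) <= t * (n - 1) * (l * l).
  have h : 12 * (d2 * l) * n <= n - 1 by nra.
  have tl : 0 <= t * (l * l) by nra.
  have h' := ler_wpM2l tl h.
  apply: le_trans (_ : t * (l * l) * (12 * (d2 * l) * n) <= _); first by apply: eqle; ring.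
  by apply: le_trans h' _; apply: eqle; ring.
have s2 : t * (n - 1) * (l * l) <= 2 * ((n - 1) * (n * (n * (F2 * (2 * l))))) by lra.
have s3 : t * l <= 4 * (n * (n * F2)).
  have hp : 0 < (n - 1) * l by nra.
  rewrite -(ler_pM2l hp).
  have -> : (n - 1) * l * (t * l) = t * (n - 1) * (l * l) by ring.
  by apply: le_trans s2 _; apply: eqle; ring.
have s4 : F2 * l <= F * d2^-1 / 2.
  by rewrite ler_pdivlMr; [apply: le_trans F2b; apply: eqle; ring | lra].
have s5 : t * l * l <= 2 * (n * (n * F)) * d2^-1.
  have : t * l * l <= 4 * (n * (n * F2)) * l by apply: ler_wpM2r => //; lra.
  move=> h; apply: le_trans h _.
  have nn : 0 <= 4 * (n * n) by nra.
  have := ler_wpM2l nn s4; move=> h'.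
  apply: le_trans (_ : 4 * (n * n) * (F2 * l) <= _); first by apply: eqle; ring.
  by apply: le_trans h' _; apply: eqle; field; rewrite gt_eqF.
have s6 : x * d1 * (l * l) * d2 <= 2 * n * F.
  have ll : 0 <= l * l by nra.
  have := ler_wpM2r ll T; move=> h.
  have : x * (d1 * n) * (l * l) <= 2 * (n * (n * F)) * d2^-1 by apply: le_trans h _; apply: le_trans s5; apply: eqle; ring.
  move=> h2; have := ler_wpM2r (ltW d2p) h2.
  have -> : 2 * (n * (n * F)) * d2^-1 * d2 = n * (2 * n * F) by field; lra.
  have -> : x * (d1 * n) * (l * l) * d2 = n * (x * d1 * (l * l) * d2) by ring.
  by rewrite ler_pM2l.
have s7 : 1 <= 2304 * ((d2 * l) * (d2 * l)) by nra.
have xd : 0 <= x * d1 / d2 by apply: divr_ge0 => //; nra.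
have s8 : x * d1 / d2 <= 2304 * (x * d1 * (l * l) * d2).
  have := ler_wpM2l xd s7; rewrite mulr1 => h; apply: le_trans h _; apply: eqle; field; lra.
have s9 : x * d1 / d2 <= 4608 * n * F by lra.
have : x = (x * d1 / d2) * (d2 / d1) by field; apply/andP; split; lra.
move=> ->; have q : 0 <= d2 / d1 by apply: divr_ge0; lra.
have := ler_wpM2r q s9; move=> h; apply: le_trans h _; apply: eqle; ring.
Qed.

Section Main.
Variable p' : nat.
Local Notation N := p'.+2.
Local Notation G := 'Z_N.
Local Notation v x := (nat_of_ord (x%R : G)).
Hypothesis pN : prime N.
Variables (X Y Z : {set G}) (L : nat).

Definition al (l u x : G) : nat := v (l * x - u).
Definition tri (t : G * G) := [&& t.1 \in X, t.2 \in Y & - t.1 - t.2 \in Z].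
Definition inR l u w (t : G * G) := [&& tri t, (al l u t.1 < L)%N & (al l w t.2 < L)%N].
Definition Rset l u w := [set t | inR l u w t].
Definition Sset l u w := [set t | [&& inR l u w t,
   [forall y, inR l u w (t.1, y) ==> (y == t.2)],
   [forall x, inR l u w (x, t.2) ==> (x == t.1)] &
   [forall x, inR l u w (x, t.1 + t.2 - x) ==> (x == t.1)]]].

Lemma SsetP l u w t : t \in Sset l u w -> [/\ inR l u w t,
   forall y, inR l u w (t.1, y) -> y = t.2,
   forall x, inR l u w (x, t.2) -> x = t.1 &
   forall x, inR l u w (x, t.1 + t.2 - x) -> x = t.1].
Proof.
rewrite inE => /and4P [h1 /forallP h2 /forallP h3 /forallP h4]; split => //.
- by move=> y hy; apply/eqP; move/implyP: (h2 y); apply.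
- by move=> x hx; apply/eqP; move/implyP: (h3 x); apply.
- by move=> x hx; apply/eqP; move/implyP: (h4 x); apply.
Qed.

Lemma al_eq l u w a b c d : l != 0 ->
  (al l u a + al l w b = al l u c + al l w d)%N -> a + b = c + d.
Proof.
move=> hl /(congr1 (fun n => n%:R : G)); rewrite !natrD /al !natr_valG => H.
apply: (mulrI (unitG pN hl)).
have -> : l * (a + b) = (l * a - u + (l * b - w)) + (u + w) by ring.
by rewrite H; ring.
Qed.

Lemma match_bound (R : realType) (f : R -> R) (hf : standing_assumptions f)
   L' (hL : L = L'.+1) (hLN : (L.*2 <= N)%N) l u w (hl : l != 0) :
   (#|Sset l u w|%:R : R) <= f (L.*2)%:R * (L.*2)%:R.
Proof.
case: hf => _ hm _ _.
have e : (L.*2 = (L'.*2.+1).+1)%N by rewrite hL doubleS.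
rewrite e.
set S := Sset l u w.
pose en (i : 'I_#|S|) := enum_val i.
pose x (i : 'I_#|S|) : 'I_(L'.*2.+1).+1 := inord (al l u (en i).1).
pose y (i : 'I_#|S|) : 'I_(L'.*2.+1).+1 := inord (al l w (en i).2).
pose z (i : 'I_#|S|) : 'I_(L'.*2.+1).+1 := - inord (al l u (en i).1 + al l w (en i).2).
apply: (hm _ _ x y z).
have hLL : (L <= L'.*2.+2)%N by rewrite -e -addnn leq_addr.
have ab i : (al l u (en i).1 < L)%N /\ (al l w (en i).2 < L)%N.
  by case: (SsetP (enum_valP i)) => /and3P [_ ? ?].
have vx i : nat_of_ord (x i) = al l u (en i).1.
  by rewrite inordK //; case: (ab i) => h _; apply: leq_trans h _.
have vy i : nat_of_ord (y i) = al l w (en i).2.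
  by rewrite inordK //; case: (ab i) => _ h; apply: leq_trans h _.
move=> i j k.
have -> : (x i + y j + z k == 0) = (al l u (en i).1 + al l w (en j).2 == al l u (en k).1 + al l w (en k).2)%N.
  rewrite /z subr_eq0 -val_eqE /= vx vy inordK; last first.
    by case: (ab k) => h1 h2; rewrite -e -addnn; exact: leq_add h1 (ltnW h2).
  by rewrite modn_small //; case: (ab i) => h1 _; case: (ab j) => _ h2; rewrite -e -addnn; exact: leq_add h1 (ltnW h2).
apply/idP/idP; last by case/andP => /eqP <- /eqP <-.
move/eqP => /(al_eq hl) E.
case: (SsetP (enum_valP i)) => Ri Ai Bi Ci.
case: (SsetP (enum_valP j)) => Rj Aj Bj Cj.
case: (SsetP (enum_valP k)) => Rk Ak Bk Ck.
rewrite -/(en i) -/(en j) -/(en k) in Ri Ai Bi Ci Rj Aj Bj Cj Rk Ak Bk Ck.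
have Rij : inR l u w ((en i).1, (en j).2).
  case/and3P: Ri => /and3P [hx _ _] h1 _.
  case/and3P: Rj => /and3P [_ hy _] _ h2.
  case/and3P: Rk => /and3P [_ _ hz] _ _.
  apply/and3P; split => //; apply/and3P; split => //=.
  by have -> : - (en i).1 - (en j).2 = - (en k).1 - (en k).2 by rewrite -opprD E opprD.
have yji := Ai _ Rij.
have xij : (en i).1 = (en j).1 by apply: Bj.
have eij : en i = en j by rewrite [en i]surjective_pairing [en j]surjective_pairing xij yji.
have ij : i = j by apply: enum_val_inj.
have xik : (en i).1 = (en k).1.
  apply: Ck.
  have -> : (en k).1 + (en k).2 - (en i).1 = (en i).2 by rewrite -E yji; ring.
  by rewrite -surjective_pairing.
have yik : (en i).2 = (en k).2.
  by apply: (addrI (en i).1); rewrite -yji E xik.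
have eik : en i = en k by rewrite [en i]surjective_pairing [en k]surjective_pairing xik yik.
have ik : i = k by apply: enum_val_inj.
by rewrite -ij -ik eqxx.
Qed.


Definition Aset l u w := [set q : (G * G) * G |
  [&& inR l u w q.1, inR l u w (q.1.1, q.2) & q.2 != q.1.2]].
Definition Bset l u w := [set q : (G * G) * G |
  [&& inR l u w q.1, inR l u w (q.2, q.1.2) & q.2 != q.1.1]].
Definition Cset l u w := [set q : (G * G) * G |
  [&& inR l u w q.1, inR l u w (q.2, q.1.1 + q.1.2 - q.2) & q.2 != q.1.1]].

Lemma card_U_le (T : finType) (A B : {set T}) : (#|A :|: B| <= #|A| + #|B|)%N.
Proof. by rewrite cardsU leq_subr. Qed.

Lemma pointwise l u w : (#|Rset l u w| <=
   #|Sset l u w| + #|Aset l u w| + #|Bset l u w| + #|Cset l u w|)%N.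
Proof.
have sub : Rset l u w \subset Sset l u w :|: fst @: Aset l u w :|: fst @: Bset l u w
                        :|: fst @: Cset l u w.
  apply/subsetP => t; rewrite inE => Rt.
  case: (boolP [forall y, inR l u w (t.1, y) ==> (y == t.2)]) => [h1|/forallPn [y]]; last first.
    rewrite negb_imply => /andP [hy ne].
    have hA : t \in fst @: Aset l u w by apply/imsetP; exists (t, y); rewrite ?inE //= Rt hy ne.
    by rewrite !in_setU hA !orbT.
  case: (boolP [forall x, inR l u w (x, t.2) ==> (x == t.1)]) => [h2|/forallPn [x]]; last first.
    rewrite negb_imply => /andP [hx ne].
    have hB : t \in fst @: Bset l u w by apply/imsetP; exists (t, x); rewrite ?inE //= Rt hx ne.
    by rewrite !in_setU hB !orbT.
  case: (boolP [forall x, inR l u w (x, t.1 + t.2 - x) ==> (x == t.1)]) => [h3|/forallPn [x]]; last first.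
    rewrite negb_imply => /andP [hx ne].
    have hC : t \in fst @: Cset l u w by apply/imsetP; exists (t, x); rewrite ?inE //= Rt hx ne.
    by rewrite !in_setU hC !orbT.
  have hS : t \in Sset l u w by rewrite inE Rt h1 h2 h3.
  by rewrite !in_setU hS.
apply: leq_trans (subset_leq_card sub) _.
apply: leq_trans (card_U_le _ _) _; apply: leq_add; last exact: leq_imset_card.
apply: leq_trans (card_U_le _ _) _; apply: leq_add; last exact: leq_imset_card.
apply: leq_trans (card_U_le _ _) _; apply: leq_add => //; exact: leq_imset_card.
Qed.

Definition T3 := #|[set t | tri t]|.

Lemma card_sum3 (Tt : finType) (A : G -> G -> G -> {set Tt}) :
  Sum3 (fun l u w => #|A l u w|) = Sum3 (fun l u w => \sum_t (t \in A l u w : nat))%N.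
Proof.
rewrite /Sum3; apply: eq_bigr => l _; apply: eq_bigr => u _; apply: eq_bigr => w _.
by rewrite sum_boolT.
Qed.

Lemma sumR (hLN : (L <= N)%N) :
  Sum3 (fun l u w => #|Rset l u w|) = (T3 * (N.-1 * (L * L)))%N.
Proof.
rewrite card_sum3 Sum3_sum /T3 -sum_boolT big_distrl /=; apply: eq_bigr => t _.
rewrite inE /Sum3 /Rset.
under eq_bigr => l _ do under eq_bigr => u _ do under eq_bigr => w _ do rewrite inE.
rewrite /inR; case: (tri t) => /=; last first.
  by rewrite mul0n big1 // => l _; rewrite big1 // => u _; rewrite big1.
rewrite /al.
under eq_bigr => l _ do rewrite inner_prod !card_window //.
rewrite -big_distrl /= (eq_bigr (fun _ => (1 * L)%N)); last by move=> *; rewrite mul1n.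
by rewrite -big_distrl /= cnt_nz; lia.
Qed.

Definition good (d l : G) := ((v (d * l) < L)%N || (v (- (d * l)) < L)%N).

Lemma pair_win (hLN : (L <= N)%N) (l a a' : G) :
  (#|[set w : G | (al l w a < L)%N && (al l w a' < L)%N]| <= L * good (a' - a)%R l)%N.
Proof.
case gd: (good (a' - a) l).
  rewrite muln1; apply: leq_trans (_ : _ <= #|[set u : G | (v (l * a - u) < L)%N]|)%N _;
    last by rewrite card_window.
  apply: subset_leq_card; by apply/subsetP => w; rewrite !inE /al => /andP [].
rewrite muln0 leqn0 cards_eq0; apply/eqP/setP => w; rewrite !inE /al.
apply/negP => /andP [h1 h2]; have := diff_small h1 h2.
have -> : l * a' - w - (l * a - w) = (a' - a) * l by ring.
by move=> H; move: gd; rewrite /good H.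
Qed.

Lemma good_sum (d : G) : d != 0 ->
  (\sum_(l : G | l != 0%R) good d l <= L + L)%N.
Proof.
move=> hd; have U := unitG pN hd.
apply: leq_trans (_ : \sum_(l : G) ((l \in [set l : G | (v (d * l) < L)%N]) +
      (l \in [set l : G | (v (- (d * l)) < L)%N]))%N <= _)%N.
  rewrite [X in (_ <= X)%N](bigID (fun l : G => l != 0%R)) /=; apply: leq_trans (leq_addr _ _).
  by apply: leq_sum => l _; rewrite !inE /good; case: (_ < L)%N; case: (_ < L)%N.
rewrite big_split /= !sum_boolT; apply: leq_add.
  apply: (@card_line _ L d (fun l => d * l)); exact: (mulrI U).
apply: (@card_line _ L d (fun l => - (d * l))).
by move=> x y /oppr_inj; apply: (mulrI U).
Qed.

Lemma pair_sumV (hLN : (L <= N)%N) (a a' b : G) : a != a' ->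
  (Sum3 (fun l u w => (al l u b < L)%N && ((al l w a < L)%N && (al l w a' < L)%N)) <= L * L * (L + L))%N.
Proof.
move=> ne; have hd : a' - a != 0 by rewrite subr_eq0 eq_sym.
rewrite /Sum3; under eq_bigr => l _ do rewrite inner_prod.
apply: leq_trans (_ : \sum_(l : G | l != 0%R) L * (L * good (a' - a)%R l) <= _)%N.
  apply: leq_sum => l _; apply: leq_mul; last exact: pair_win.
  by rewrite /al card_window.
by rewrite -big_distrr -big_distrr /= mulnA leq_mul2l good_sum ?orbT.
Qed.

Lemma pair_sumU (hLN : (L <= N)%N) (a a' b : G) : a != a' ->
  (Sum3 (fun l u w => ((al l u a < L)%N && (al l u a' < L)%N) && (al l w b < L)%N) <= L * L * (L + L))%N.
Proof.
move=> ne; have hd : a' - a != 0 by rewrite subr_eq0 eq_sym.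
rewrite /Sum3; under eq_bigr => l _ do rewrite inner_prod.
apply: leq_trans (_ : \sum_(l : G | l != 0%R) L * (L * good (a' - a)%R l) <= _)%N.
  apply: leq_sum => l _; rewrite mulnC; apply: leq_mul; last exact: pair_win.
  by rewrite /al card_window.
by rewrite -big_distrr -big_distrr /= mulnA leq_mul2l good_sum ?orbT.
Qed.

Lemma leq_nb (b1 b2 : bool) : (b1 -> b2) -> (b1 <= b2)%N.
Proof. by case: b1; case: b2 => // /(_ isT). Qed.

Lemma Sum3_0_le (F : G -> G -> G -> nat) : (forall l u w, F l u w = 0%N) -> forall n, (Sum3 F <= n)%N.
Proof.
move=> h n; apply: leq_trans (leq0n n); rewrite /Sum3 leqn0 big1 // => l _; rewrite big1 // => u _; rewrite big1 // => w _.
Qed.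

Lemma sumA (hLN : (L <= N)%N) :
  (Sum3 (fun l u w => #|Aset l u w|) <= L * L * (L + L) *
     #|[set q : G * G * G | tri q.1 && tri (q.1.1, q.2)]|)%N.
Proof.
rewrite card_sum3 Sum3_sum -sum_boolT big_distrr /=; apply: leq_sum => q _.
rewrite inE.
case: (boolP (q.2 == q.1.2)) => [/eqP eq | ne].
  apply: Sum3_0_le => l u w; rewrite inE eq eqxx.
  by rewrite !andbF.
case T: (tri q.1 && tri (q.1.1, q.2)); last first.
  apply: Sum3_0_le => l u w; apply/eqP; rewrite eqb0 inE /inR.
  by apply/negP => /and3P [/and3P [t1 _ _] /and3P [t2 _ _] _]; rewrite t1 t2 in T.
rewrite muln1; apply: leq_trans (_ : Sum3 (fun l u w => (al l u q.1.1 < L)%N && ((al l w q.1.2 < L)%N && (al l w q.2 < L)%N)) <= _)%N; last first.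
  by apply: pair_sumV => //; rewrite eq_sym.
apply: Sum3_le => l u w _; apply: leq_nb; rewrite inE /inR /=.
by case/and3P => /and3P [_ h1 h2] /and3P [_ h3 h4] _; rewrite ?h1 ?h2 ?h3 ?h4.
Qed.

Lemma sumB (hLN : (L <= N)%N) :
  (Sum3 (fun l u w => #|Bset l u w|) <= L * L * (L + L) *
     #|[set q : G * G * G | tri q.1 && tri (q.2, q.1.2)]|)%N.
Proof.
rewrite card_sum3 Sum3_sum -sum_boolT big_distrr /=; apply: leq_sum => q _.
rewrite inE.
case: (boolP (q.2 == q.1.1)) => [/eqP eq | ne].
  apply: Sum3_0_le => l u w; rewrite inE eq eqxx.
  by rewrite !andbF.
case T: (tri q.1 && tri (q.2, q.1.2)); last first.
  apply: Sum3_0_le => l u w; apply/eqP; rewrite eqb0 inE /inR.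
  by apply/negP => /and3P [/and3P [t1 _ _] /and3P [t2 _ _] _]; rewrite t1 t2 in T.
rewrite muln1; apply: leq_trans (_ : Sum3 (fun l u w => ((al l u q.1.1 < L)%N && (al l u q.2 < L)%N) && (al l w q.1.2 < L)%N) <= _)%N; last first.
  by apply: pair_sumU => //; rewrite eq_sym.
apply: Sum3_le => l u w _; apply: leq_nb; rewrite inE /inR /=.
by case/and3P => /and3P [_ h1 h2] /and3P [_ h3 h4] _; rewrite ?h1 ?h2 ?h3 ?h4.
Qed.

Lemma sumC (hLN : (L <= N)%N) :
  (Sum3 (fun l u w => #|Cset l u w|) <= L * L * (L + L) *
     #|[set q : G * G * G | tri q.1 && tri (q.2, (q.1.1 + q.1.2 - q.2)%R)]|)%N.
Proof.
rewrite card_sum3 Sum3_sum -sum_boolT big_distrr /=; apply: leq_sum => q _.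
rewrite inE.
case: (boolP (q.2 == q.1.1)) => [/eqP eq | ne].
  apply: Sum3_0_le => l u w; rewrite inE eq eqxx.
  by rewrite !andbF.
case T: (tri q.1 && tri (q.2, (q.1.1 + q.1.2 - q.2)%R)); last first.
  apply: Sum3_0_le => l u w; apply/eqP; rewrite eqb0 inE /inR.
  by apply/negP => /and3P [/and3P [t1 _ _] /and3P [t2 _ _] _]; rewrite t1 t2 in T.
rewrite muln1; apply: leq_trans (_ : Sum3 (fun l u w => ((al l u q.1.1 < L)%N && (al l u q.2 < L)%N) && (al l w q.1.2 < L)%N) <= _)%N; last first.
  by apply: pair_sumU => //; rewrite eq_sym.
apply: Sum3_le => l u w _; apply: leq_nb; rewrite inE /inR /=.
by case/and3P => /and3P [_ h1 h2] /and3P [_ h3 h4] _; rewrite ?h1 ?h2 ?h3 ?h4.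
Qed.

Lemma Sum3D (F1 F2 : G -> G -> G -> nat) :
  Sum3 (fun l u w => F1 l u w + F2 l u w)%N = (Sum3 F1 + Sum3 F2)%N.
Proof.
rewrite /Sum3 -big_split; apply: eq_bigr => l _; rewrite -big_split; apply: eq_bigr => u _.
by rewrite -big_split.
Qed.

Lemma sum_const_nz (R : realType) (c : R) : \sum_(l : G | l != 0) c = (N.-1)%:R * c.
Proof.
by rewrite -cnt_nz natr_sum big_distrl /=; apply: eq_bigr => l _; rewrite mul1r.
Qed.

Lemma sum_constG (R : realType) (c : R) : \sum_(l : G) c = N%:R * c.
Proof.
have e : (\sum_(l : G) 1)%N = N by rewrite big_const_ord iter_addn_0 mul1n.
transitivity (((\sum_(l : G) 1)%N)%:R * c); last by rewrite e.
by rewrite natr_sum big_distrl /=; apply: eq_bigr => l _; rewrite mul1r.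
Qed.

Lemma Sum3_real (R : realType) (F : G -> G -> G -> nat) (B : R) :
  (forall l u w, l != 0 -> (F l u w)%:R <= B) ->
  (Sum3 F)%:R <= (N.-1)%:R * (N%:R * (N%:R * B)).
Proof.
move=> h; rewrite /Sum3 natr_sum -sum_const_nz; apply: ler_sum => l hl.
rewrite natr_sum -sum_constG; apply: ler_sum => u _.
rewrite natr_sum -sum_constG; apply: ler_sum => w _.
exact: h.
Qed.

Lemma T3_eq : T3 = (\sum_(x in X) #|[set b in Y | (- x - b)%R \in Z]|)%N.
Proof.
rewrite /T3 -sum_boolT (eq_bigr (fun p => ((p.1, p.2) \in [set t | tri t] : nat))); last by case.
rewrite -(pair_bigA _ (fun x y => ((x, y) \in [set t | tri t] : nat))) /= [RHS]big_mkcond /=; apply: eq_bigr => x _.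
rewrite -sum_boolT; case: ifP => hx.
  by apply: eq_bigr => y _; rewrite !inE /tri /= hx.
by rewrite big1 // => y _; rewrite !inE /tri /= hx.
Qed.

Lemma TX_eq (g : G * G -> G -> bool) :
  #|[set q : G * G * G | tri q.1 && g q.1 q.2]| = (\sum_(t : G * G) tri t * #|[set w | g t w]|)%N.
Proof.
rewrite -sum_boolT (eq_bigr (fun p => ((p.1, p.2) \in [set q : G * G * G | tri q.1 && g q.1 q.2] : nat)));
  last by case.
rewrite -(pair_bigA _ (fun t w => ((t, w) \in [set q : G * G * G | tri q.1 && g q.1 q.2] : nat))) /=; apply: eq_bigr => t _.
rewrite -sum_boolT big_distrr /=; apply: eq_bigr => w _.
by rewrite !inE /=; case: (tri t); case: (g t w).
Qed.

Lemma TX_le (R : realType) (g : G * G -> G -> bool) (D : R) :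
  (forall t, tri t -> (#|[set w | g t w]|%:R : R) <= D) -> 0 <= D ->
  (#|[set q : G * G * G | tri q.1 && g q.1 q.2]|%:R : R) <= T3%:R * D.
Proof.
move=> h D0; rewrite TX_eq natr_sum /T3 -sum_boolT natr_sum mulr_suml; apply: ler_sum => t _.
rewrite natrM inE; case T: (tri t) => /=; last by rewrite !mul0r.
by rewrite !mul1r; apply: h.
Qed.

Lemma real_count (R : realType) (d1 d2 : R) (f : R -> R)
  (hf : standing_assumptions f) (h1 : 0 < d1) (h12 : d1 <= d2)
  (cXYZ : count_bounds d1 d2 X Y Z) (cYXZ : count_bounds d1 d2 Y X Z)
  (cZXY : count_bounds d1 d2 Z X Y)
  L' (hL : L = L'.+1) (hLN : (L.*2 <= N)%N) :
  (T3%:R : R) * (N.-1)%:R * (L%:R * L%:R) <=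
    (N.-1)%:R * (N%:R * (N%:R * (f (L.*2)%:R * (L.*2)%:R))) +
    (L%:R * L%:R * (L%:R + L%:R)) * (3%:R * (T3%:R * (d2 * N%:R))).
Proof.
have hLN' : (L <= N)%N by apply: leq_trans hLN; rewrite -addnn leq_addr.
have d2p : 0 <= d2 * N%:R by apply: mulr_ge0 => //; apply: ltW; apply: lt_le_trans h12.
have nat1 := pointwise.
have E : (T3 * (N.-1 * (L * L)) <= Sum3 (fun l u w => #|Sset l u w|) +
     Sum3 (fun l u w => #|Aset l u w|) + Sum3 (fun l u w => #|Bset l u w|) +
     Sum3 (fun l u w => #|Cset l u w|))%N.
  rewrite -sumR // -!Sum3D; apply: Sum3_le => l u w _; exact: pointwise.
have ES := Sum3_real (B := f (L.*2)%:R * (L.*2)%:R) (F := fun l u w => #|Sset l u w|)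
   (fun l u w hl => match_bound hf hL hLN u w hl).
have EA : (#|[set q : G * G * G | tri q.1 && tri (q.1.1, q.2)]|%:R : R) <= T3%:R * (d2 * N%:R).
  apply: (TX_le (g := fun t w => tri (t.1, w))) => // t /and3P [tx ty tz].
  apply: le_trans _ (proj2 (cXYZ _ tx)); rewrite ler_nat; apply: subset_leq_card.
  by apply/subsetP => w; rewrite !inE /tri /= => /and3P [_ -> ->].
have EB : (#|[set q : G * G * G | tri q.1 && tri (q.2, q.1.2)]|%:R : R) <= T3%:R * (d2 * N%:R).
  apply: (TX_le (g := fun t w => tri (w, t.2))) => // t /and3P [tx ty tz].
  apply: le_trans _ (proj2 (cYXZ _ ty)); rewrite ler_nat; apply: subset_leq_card.
  apply/subsetP => w; rewrite !inE /tri /= => /and3P [-> _ h].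
  by have -> : - t.2 - w = - w - t.2 by ring.
have EC : (#|[set q : G * G * G | tri q.1 && tri (q.2, q.1.1 + q.1.2 - q.2)]|%:R : R) <= T3%:R * (d2 * N%:R).
  apply: (TX_le (g := fun t w => tri (w, t.1 + t.2 - w))) => // t /and3P [tx ty tz].
  apply: le_trans _ (proj2 (cZXY _ tz)); rewrite ler_nat; apply: subset_leq_card.
  apply/subsetP => w; rewrite !inE /tri /= => /and3P [-> h _].
  by have -> : - (- t.1 - t.2) - w = t.1 + t.2 - w by ring.
have := sumA hLN'; have := sumB hLN'; have := sumC hLN'.
rewrite -!(ler_nat R) => SC SB SA.
move: E; rewrite -(ler_nat R) !natrD !natrM => E.
rewrite -mulrA; apply: le_trans E _.
rewrite -!addrA; apply: lerD; first exact: ES.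
have -> : 3%:R * (T3%:R * (d2 * N%:R)) = T3%:R * (d2 * N%:R) + (T3%:R * (d2 * N%:R) + T3%:R * (d2 * N%:R)) :> R.
  by rewrite -[3%N]/(1 + (1 + 1))%N !natrD !mulrDl !mul1r.
have c0 : (0 : R) <= L%:R * L%:R * (L%:R + L%:R) by rewrite !mulr_ge0 ?addr_ge0 ?ler0n.
rewrite (mulrDr (L%:R * L%:R * (L%:R + L%:R))) (mulrDr (L%:R * L%:R * (L%:R + L%:R))).
apply: lerD; last apply: lerD.
- by apply: le_trans SA _; rewrite !natrM natrD; apply: ler_pM => //; rewrite ?ler0n.
- by apply: le_trans SB _; rewrite !natrM natrD; apply: ler_pM => //; rewrite ?ler0n.
- by apply: le_trans SC _; rewrite !natrM natrD; apply: ler_pM => //; rewrite ?ler0n.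
Qed.

Lemma bound_X (R : realType) (f : R -> R) (hf : standing_assumptions f) (d1 d2 : R)
  (h1 : 0 < d1) (h12 : d1 <= d2)
  (cXYZ : count_bounds d1 d2 X Y Z) (cYXZ : count_bounds d1 d2 Y X Z)
  (cZXY : count_bounds d1 d2 Z X Y)
  (hL1 : (1 <= L)%N) (hLd : 24 * d2 * L%:R <= 1) (hLd2 : 1 <= 48 * d2 * L%:R)
  (hLN : (L.*2 <= N)%N) :
  (#|X|%:R : R) <= 4608 * (d2 / d1) * f (d2^-1) * N%:R.
Proof.
have [L' hL] : exists L', L = L'.+1 by move: hL1; case: (L) => // n _; exists n.
have RC := real_count hf h1 h12 cXYZ cYXZ cZXY hL hLN.
have d2p : 0 < d2 by apply: lt_le_trans h12.
have e2 : ((L.*2)%:R : R) = 2 * L%:R by rewrite -addnn natrD; ring.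
have eN : ((N.-1)%:R : R) = N%:R - 1 by rewrite /= -natr1; ring.
case: hf => fpos _ _ fmono.
have l0 : (0 : R) < L%:R by rewrite ltr0n.
apply: (@final_alg R T3%:R N%:R L%:R #|X|%:R d1 d2 (f (L.*2)%:R) (f d2^-1)) => //.
- by rewrite ler_nat.
- by rewrite ler1n.
- by apply: ltW; apply: fpos; rewrite ltr0n -addnn; lia.
- by rewrite -eN -e2.
- rewrite T3_eq natr_sum.
  apply: le_trans (_ : \sum_(x in X) (d1 * N%:R) <= _).
    by rewrite sumr_const mulr_natl.
  by apply: ler_sum => x hx; case: (cXYZ _ hx).
- have lt : (L.*2)%:R < d2^-1.
    rewrite e2; have : 2 * L%:R * d2 < 1 by nra.
    by move=> h; rewrite -(ltr_pM2r d2p) mulVf ?gt_eqF.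
  have h2L : (0 : R) < (L.*2)%:R by rewrite ltr0n -addnn; lia.
  have := fmono _ _ h2L lt.
  by rewrite e2 => h; apply: ltW; rewrite mulrC [X in _ < X]mulrC.
Qed.
End Main.


Lemma f1_ge1 (R : realType) (f : R -> R) : standing_assumptions f -> 1 <= f 1.
Proof.
case=> _ hm _ _.
have := hm 0%N 1%N (fun _ => 0) (fun _ => 0) (fun _ => 0).
rewrite mulr1; apply.
by move=> i j k; rewrite !ord1 !eqxx.
Qed.

Lemma f_lb (R : realType) (f : R -> R) (d2 : R) : standing_assumptions f -> 0 < d2 ->
  1 <= f d2^-1 \/ d2 <= f d2^-1.
Proof.
move=> hf d2p; have f1 := f1_ge1 hf; case: hf => fpos _ fdec fmono.
case: (lerP 1 d2) => h.
  left; apply: le_trans f1 _; apply: fdec.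
    by rewrite invr_gt0.
  by rewrite invf_le1.
right.
have hi : 1 < d2^-1 by rewrite invf_gt1 // d2p.
have := fmono 1 d2^-1 ltr01 hi.
rewrite mul1r => h2.
have : d2 * f 1 < d2 * (d2^-1 * f d2^-1) by rewrite ltr_pM2l.
rewrite mulrA mulfV ?gt_eqF // mul1r => h3.
apply: le_trans (ltW h3); rewrite -{1}(mulr1 d2); rewrite ler_pM2l //.
Qed.

Lemma bound_any (R : realType) (f : R -> R) (hf : standing_assumptions f) (N : nat)
  (X Y Z : {set 'Z_N}) (d1 d2 : R) (pN : prime N) (h1 : 0 < d1) (h12 : d1 <= d2)
  (c1 : count_bounds d1 d2 X Y Z) (c2 : count_bounds d1 d2 Y X Z)
  (c3 : count_bounds d1 d2 Z X Y) :
  (#|X|%:R : R) <= 4608 * (d2 / d1) * f d2^-1 * N%:R.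
Proof.
move: X Y Z c1 c2 c3 pN; case: N => [|[|p']] // X Y Z c1 c2 c3 pN.
have d2p : 0 < d2 by apply: lt_le_trans h12.
have flb := f_lb hf d2p.
have fp : 0 < f d2^-1 by case: hf => fpos _ _ _; apply: fpos; rewrite invr_gt0.
have q1 : 1 <= d2 / d1 by rewrite ler_pdivlMr // mul1r.
have n2 : (2 : R) <= (p'.+2)%:R by rewrite ler_nat.
case: (set_0Vmem X) => [-> | [x0 hx0]].
  rewrite cards0 /=; apply: mulr_ge0; last by rewrite ler0n.
  by apply: mulr_ge0; [apply: mulr_ge0; lra | exact: ltW].
have d2N : 1 <= d2 * (p'.+2)%:R.
  case: (c1 _ hx0) => lo hi; apply: le_trans hi.
  set c := #|_|; have : (0 : R) < c%:R by apply: lt_le_trans lo; apply: mulr_gt0 => //; lra.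
  by rewrite ltr0n ler1n.
have Xle : (#|X|%:R : R) <= (p'.+2)%:R.
  by rewrite ler_nat; apply: leq_trans (max_card _) _; rewrite card_ord.
case: (lerP d2 24^-1) => hd2; last first.
  apply: le_trans Xle _; rewrite -{1}(mul1r (p'.+2)%:R) ler_pM2r ?ltr0n //.
  have : 24^-1 <= f d2^-1 by case: flb => h; lra.
  move=> h; have : 24^-1 <= d2 / d1 * f d2^-1 by nra.
  by move=> h'; rewrite -mulrA; lra.
have [y ydef] : exists y : R, y = (24 * d2)^-1 by exists ((24 * d2)^-1).
have y1 : 1 <= y by rewrite ydef invf_ge1; [lra | nra].
have y0 : 0 <= y by lra.
pose L := Num.truncn y.
have L1 : (1 <= L)%N by rewrite truncn_gt0.
have Ly : (L%:R : R) <= y by rewrite truncn_le.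
have yL : y < L.+1%:R by apply: truncnS_gt.
have ey : 24 * d2 * y = 1 by rewrite ydef mulfV // gt_eqF //; nra.
have L1r : (1 : R) <= L%:R by rewrite ler1n.
apply: (@bound_X p' pN X Y Z L R f hf d1 d2 h1 h12 c1 c2 c3) => //.
- have : 24 * d2 * L%:R <= 24 * d2 * y by rewrite ler_pM2l //; nra.
  by rewrite ey.
- rewrite -natr1 in yL.
  have : 24 * d2 * y < 24 * d2 * (2 * L%:R) by rewrite ltr_pM2l; nra.
  by rewrite ey; lra.
- rewrite -(ler_nat R) -addnn natrD.
  have : d2^-1 <= (p'.+2)%:R.
    have : d2^-1 * 1 <= d2^-1 * (d2 * (p'.+2)%:R) by rewrite ler_pM2l ?invr_gt0.
    by rewrite mulr1 mulKf ?gt_eqF.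
  move=> h; have ed : d2^-1 = 24 * y.
    by rewrite ydef; field; rewrite gt_eqF.
  have : 2 * y <= d2^-1 by rewrite ed; lra.
  lra.
Qed.

End Helpers.
Import Helpers.

Theorem lemma2p1 (R : realType) :
  exists K : R, 0 < K /\
  forall (f : R -> R) (N : nat) (X Y Z : {set 'Z_N}) (d1 d2 : R),
    standing_assumptions f ->
    prime N ->
    0 < d1 -> d1 <= d2 ->
    count_bounds d1 d2 X Y Z -> count_bounds d1 d2 X Z Y ->
    count_bounds d1 d2 Y Z X -> count_bounds d1 d2 Y X Z ->
    count_bounds d1 d2 Z X Y -> count_bounds d1 d2 Z Y X ->
    [/\ (#|X|%:R : R) <= K * (d2 / d1) * f (d2^-1) * N%:R,
        (#|Y|%:R : R) <= K * (d2 / d1) * f (d2^-1) * N%:R &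
        (#|Z|%:R : R) <= K * (d2 / d1) * f (d2^-1) * N%:R].

Proof.
exists 4608; split; first by rewrite ltr0n.
move=> f N X Y Z d1 d2 hf pN h1 h12 cXYZ cXZY cYZX cYXZ cZXY cZYX.
split.
- have h := bound_any hf pN h1 h12 cXYZ cYXZ cZXY; exact h.
- have h := bound_any hf pN h1 h12 cYXZ cXYZ cZYX; exact h.
- have h := bound_any hf pN h1 h12 cZXY cXZY cYZX; exact h.
Qed.
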